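(* In a strongly causal, digitalizable OPT, let $\Psi\in\mathsf{St}_1(\mathrm{A}\mathrm{B})$ and let $\rho=(\mathcal I_{\mathrm{A}}\boxtimes e_{\mathrm{B}})\Psi\in\mathsf{St}_1(\mathrm{A})$ and $\sigma=(e_{\mathrm{A}}\boxtimes\mathcal I_{\mathrm{B}})\Psi\in\mathsf{St}_1(\mathrm{B})$ be its marginals. Then $I(\Psi)\le I(\rho)+I(\sigma)$.
   Context: Framework (operational probabilistic theory, OPT): each system $\mathrm{A}$ has a set of states $\mathsf{St}(\mathrm{A})$ (normalized/deterministic ones $\mathsf{St}_1(\mathrm{A})$), effects $\mathsf{Eff}(\mathrm{A})$, and transformations $\mathsf{Tr}(\mathrm{A}\to\mathrm{B})$ (deterministic ones, i.e. channels, $\mathsf{Tr}_1(\mathrm{A}\to\mathrm{B})$); transformations compose sequentially ($\circ$) and in parallel ($\boxtimes$), $\mathrm{A}\mathrm{B}$ is the composite system, $\mathrm{I}$ the trivial system, and $(a|\rho)\in[0,1]$ the probability of effect $a$ on state $\rho$. A test is a collection of events summing to a channel. The theory is strongly causal: for every test $\{\mathcal A_i\}$ and family of tests $\{\mathcal B^i_j\}_j$ indexed by $i$, $\{\mathcal B^i_j\circ\mathcal A_i\}_{i,j}$ is a test; in particular every system has a unique deterministic effect $e_{\mathrm{A}}$. Operational norm: $\|\delta\|_{\rm op}:=\sup_{a\in\mathsf{Eff}(\mathrm{A})}((2a-e_{\mathrm{A}})|\delta)$ on the real span of states. A dilation of $\rho\in\mathsf{St}(\mathrm{A})$ is a state $\Psi\in\mathsf{St}(\mathrm{A}\mathrm{C})$,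 for some system $\mathrm{C}$, with $(\mathcal I_{\mathrm{A}}\boxtimes e_{\mathrm{C}})\Psi=\rho$; $D_\rho$ is the set of all dilations of $\rho$. A refinement of a state $\Omega$ is a collection $\{\Psi_i\}$ of states that is a subset of some preparation test and satisfies $\sum_i\Psi_i=\Omega$. Digitalizability: there is a system $\mathrm{O}$ (an obit) such that for every system $\mathrm{X}$ there exist $k<\infty$ and channels $\mathcal C:\mathrm{X}\to\mathrm{O}^{\boxtimes k}$, $\mathcal F:\mathrm{O}^{\boxtimes k}\to\mathrm{X}$ with $\mathcal F\circ\mathcal C=\mathcal I_{\mathrm{X}}$. Information content: for $\rho\in\mathsf{St}_1(\mathrm{A})$ and positive integers $N,M$, a compression scheme is a pair $\mathcal E\in\mathsf{Tr}_1(\mathrm{A}^{\boxtimes N}\to\mathrm{O}^{\boxtimes M})$, $\mathcal D\in\mathsf{Tr}_1(\mathrm{O}^{\boxtimes M}\to\mathrm{A}^{\boxtimes N})$. $E_{N,M,\varepsilon}(\rho)$ is the set of schemes with $\sup_{\mathrm{C},\{\Psi_i\}}\sum_i\|((\mathcal D\circ\mathcal E)\boxtimes\mathcal I_{\mathrm{C}})\Psi_i-\Psi_i\|_{\rm op}<\varepsilon$, the supremum over all systems $\mathrm{C}$ and all refinements $\{\Psi_i\}\subseteq\mathsf{St}(\mathrm{A}^{\boxtimes N}\mathrm{C})$ of dilations of $\rho^{\boxtimes N}$. $R_{N,\varepsilon}(\rho):=\min\{M:E_{N,M,\varepsilon}(\rho)\ne\emptyset\}/N$, $I(\rho):=\lim_{\varepsilon\to0}\limsup_{N\to\infty}R_{N,\varepsilon}(\rho)$.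 For a state of $\mathrm{A}\mathrm{B}$, $(\mathrm{A}\mathrm{B})^{\boxtimes N}$ is identified with $\mathrm{A}^{\boxtimes N}\mathrm{B}^{\boxtimes N}$. *)

(* Defs.v *)
From HB Require Import structures.
From mathcomp Require Import all_boot all_order all_algebra.
From mathcomp Require Import classical_sets boolp reals ereal topology normedtype sequences.
Set Implicit Arguments. Unset Strict Implicit. Unset Printing Implicit Defensive.
Import Order.TTheory GRing.Theory Num.Theory.
Local Open Scope ring_scope.

(* Systems form a (non-strict) symmetric monoidal
   structure; V A B is the real span of Tr(A -> B) (events are identified
   operationally, see [op_sep]); tests are finite lists of events. *)
Record OPT (R : realType) := MkOPT {
  sys : Type;
  sI : sys;
  sT : sys -> sys -> sys;
  V : sys -> sys -> lmodType R;
  comp : forall A B C, V B C -> V A B -> V A C;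
  par : forall A B C D, V A B -> V C D -> V (sT A C) (sT B D);
  idt : forall A, V A A;
  asc : forall A B C, V (sT (sT A B) C) (sT A (sT B C));
  asci : forall A B C, V (sT A (sT B C)) (sT (sT A B) C);
  lu : forall A, V (sT sI A) A;  lui : forall A, V A (sT sI A);
  ru : forall A, V (sT A sI) A;  rui : forall A, V A (sT A sI);
  sw : forall A B, V (sT A B) (sT B A);
  prob : V sI sI -> R;
  test : forall A B, seq (V A B) -> Prop;
  compDl : forall A B C (f g : V B C) (h : V A B), comp (f + g) h = comp f h + comp g h;
  compZl : forall A B C (a : R) (f : V B C) (h : V A B), comp (a *: f) h = a *: comp f h;
  compDr : forall A B C (f : V B C) (g h : V A B), comp f (g + h) = comp f g + comp f h;
  compZr : forall A B C (a : R) (f : V B C) (h : V A B), comp f (a *: h) = a *: comp f h;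
  parDl : forall A B C D (f g : V A B) (h : V C D), par (f + g) h = par f h + par g h;
  parZl : forall A B C D (a : R) (f : V A B) (h : V C D), par (a *: f) h = a *: par f h;
  parDr : forall A B C D (f : V A B) (g h : V C D), par f (g + h) = par f g + par f h;
  parZr : forall A B C D (a : R) (f : V A B) (h : V C D), par f (a *: h) = a *: par f h;
  compA : forall A B C D (f : V C D) (g : V B C) (h : V A B),
      comp f (comp g h) = comp (comp f g) h;
  comp1f : forall A B (f : V A B), comp (idt B) f = f;
  compf1 : forall A B (f : V A B), comp f (idt A) = f;
  par_comp : forall A B C A' B' C' (f : V B C) (g : V A B) (f' : V B' C') (g' : V A' B'),
      par (comp f g) (comp f' g') = comp (par f f') (par g g');
  par_id : forall A B, par (idt A) (idt B) = idt (sT A B);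
  asc_nat : forall A B C A' B' C' (f : V A A') (g : V B B') (h : V C C'),
      comp (asc A' B' C') (par (par f g) h) = comp (par f (par g h)) (asc A B C);
  lu_nat : forall A B (f : V A B), comp (lu B) (par (idt sI) f) = comp f (lu A);
  ru_nat : forall A B (f : V A B), comp (ru B) (par f (idt sI)) = comp f (ru A);
  sw_nat : forall A B C D (f : V A B) (g : V C D),
      comp (sw B D) (par f g) = comp (par g f) (sw A C);
  ascK : forall A B C, comp (asci A B C) (asc A B C) = idt _;
  asciK : forall A B C, comp (asc A B C) (asci A B C) = idt _;
  luK : forall A, comp (lui A) (lu A) = idt _;
  luiK : forall A, comp (lu A) (lui A) = idt _;
  ruK : forall A, comp (rui A) (ru A) = idt _;
  ruiK : forall A, comp (ru A) (rui A) = idt _;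
  swK : forall A B, comp (sw B A) (sw A B) = idt _;
  pentagon : forall A B C D,
      comp (asc A B (sT C D)) (asc (sT A B) C D)
      = comp (par (idt A) (asc B C D)) (comp (asc A (sT B C) D) (par (asc A B C) (idt D)));
  triangle : forall A B,
      comp (par (idt A) (lu B)) (asc A sI B) = par (ru A) (idt B);
  hexagon : forall A B C,
      comp (asc B C A) (comp (sw A (sT B C)) (asc A B C))
      = comp (par (idt B) (sw A C)) (comp (asc B A C) (par (sw A B) (idt C)));
  probD : forall s t : V sI sI, prob (s + t) = prob s + prob t;
  probZ : forall (a : R) (s : V sI sI), prob (a *: s) = a * prob s;
  prob1 : prob (idt sI) = 1;
  scalarE : forall s : V sI sI, s = prob s *: idt sI;
  test_seq : forall A B C (t : seq (V A B)) (u : seq (V B C)),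
      test t -> test u -> test [seq comp g f | f <- t, g <- u];
  test_par : forall A B C D (t : seq (V A B)) (u : seq (V C D)),
      test t -> test u -> test [seq par f g | f <- t, g <- u];
  test_perm : forall A B (t u : seq (V A B)), perm_eq t u -> test t -> test u;
  test_coarse : forall A B (f g : V A B) (t : seq (V A B)),
      test (f :: g :: t) -> test ((f + g) :: t);
  test_sum : forall A B (t : seq (V A B)), test t -> test [:: \sum_(f <- t) f];
  test_id : forall A, test [:: idt A];
  test_asc : forall A B C, test [:: asc A B C];
  test_asci : forall A B C, test [:: asci A B C];
  test_lu : forall A, test [:: lu A];
  test_lui : forall A, test [:: lui A];
  test_ru : forall A, test [:: ru A];
  test_rui : forall A, test [:: rui A];
  test_sw : forall A B, test [:: sw A B];
  test_prob : forall t : seq (V sI sI), test t ->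
      (forall s, s \in t -> 0 <= prob s) /\ \sum_(s <- t) prob s = 1;
  op_sep : forall A B (f : V A B),
      (forall C (rho : V sI (sT A C)) (a : V (sT B C) sI),
          (exists t, test t /\ rho \in t) -> (exists t, test t /\ a \in t) ->
          prob (comp a (comp (par f (idt C)) rho)) = 0) -> f = 0
}.

Arguments sI {R} o. Arguments sT {R} o. Arguments V {R} o. Arguments comp {R o A B C} : rename.
Arguments par {R o A B C D} : rename. Arguments idt {R o} : rename. Arguments asc {R o} : rename.
Arguments asci {R o} : rename. Arguments lu {R o} : rename. Arguments lui {R o} : rename. Arguments ru {R o} : rename.
Arguments rui {R o} : rename. Arguments sw {R o} : rename. Arguments prob {R o} : rename. Arguments test {R o A B} : rename.

Section OPTDefs.
Context {R : realType} (T : OPT R).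
Local Notation sys := (sys T).
Local Notation V := (V T).
Local Notation I := (sI T).
Local Notation sT := (sT T).

Definition event {A B : sys} (f : V A B) : Prop := exists t, test t /\ f \in t.
(* Tr_1(A -> B): deterministic transformations = single-outcome tests *)
Definition channel {A B : sys} (f : V A B) : Prop := test [:: f].
Definition state (A : sys) (rho : V I A) := event rho.
Definition nstate (A : sys) (rho : V I A) := channel rho.
Definition effect (A : sys) (a : V A I) := event a.

Definition pairing {A : sys} (a : V A I) (rho : V I A) : R := prob (comp a rho).

(* strong causality; the uniqueness of the deterministic effect, stated in the
   paper as a consequence, is included explicitly *)
Definition strongly_causal : Prop :=
  (forall (A B C : sys) (t : seq (V A B)) (u : nat -> seq (V B C)),
      test t -> (forall i, (i < size t)%N -> test (u i)) ->
      test (flatten [seq [seq comp g (nth 0 t i) | g <- u i] | i <- iota 0 (size t)]))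
  /\ (forall A : sys, exists! e : V A I, channel e).

Definition is_det_effect (e : forall A : sys, V A I) : Prop :=
  forall A, channel (e A) /\ forall f : V A I, channel f -> f = e A.

(* n-fold parallel composition of a system: A^0 = I, A^1 = A, A^(n+1) = A (A^n) *)
Fixpoint spow1 (A : sys) (k : nat) : sys :=
  match k with 0 => A | S k' => sT A (spow1 A k') end.
Definition spow (A : sys) (n : nat) : sys :=
  match n with 0 => I | S k => spow1 A k end.

Definition stensor {A B : sys} (rho : V I A) (sig : V I B) : V I (sT A B) :=
  comp (par rho sig) (lui I).

Fixpoint stpow1 {A : sys} (rho : V I A) (k : nat) : V I (spow1 A k) :=
  match k as k0 return V I (spow1 A k0) with
  | 0 => rho
  | S k' => stensor rho (stpow1 rho k')
  end.
Definition stpow {A : sys} (rho : V I A) (n : nat) : V I (spow A n) :=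
  match n as n0 return V I (spow A n0) with
  | 0 => idt I
  | S k => stpow1 rho k
  end.

Definition digitalizable (O : sys) : Prop :=
  forall X : sys, exists (k : nat) (Cc : V X (spow O k)) (F : V (spow O k) X),
      channel Cc /\ channel F /\ comp F Cc = idt X.

Variable e : forall A : sys, V A I.

Definition margA {A B : sys} (Psi : V I (sT A B)) : V I A :=
  comp (ru A) (comp (par (idt A) (e B)) Psi).
Definition margB {A B : sys} (Psi : V I (sT A B)) : V I B :=
  comp (lu B) (comp (par (e A) (idt B)) Psi).

Local Open Scope ereal_scope.

Definition opnorm {A : sys} (d : V I A) : \bar R :=
  ereal_sup [set (prob (comp ((2%:R : R) *: a - e A) d))%:E | a in [set a | effect a]].

Definition dilation {A C : sys} (rho : V I A) (Psi : V I (sT A C)) : Prop :=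
  state Psi /\ margA Psi = rho.

Definition refinement {A : sys} (s : seq (V I A)) (Omega : V I A) : Prop :=
  (exists r t, test t /\ perm_eq (s ++ r) t) /\ (\sum_(x <- s) x)%R = Omega.

Variable O : sys.

Definition good_scheme {A : sys} (rho : V I A) (N M : nat) (eps : R)
    (E : V (spow A N) (spow O M)) (D : V (spow O M) (spow A N)) : Prop :=
  channel E /\ channel D /\
  ereal_sup [set r | exists (C : sys) (s : seq (V I (sT (spow A N) C))),
      (exists Om, dilation (stpow rho N) Om /\ refinement s Om) /\
      r = \sum_(x <- s) opnorm (comp (par (comp D E) (idt C)) x - x)%R] < eps%:E.

Definition rate {A : sys} (rho : V I A) (N : nat) (eps : R) : \bar R :=
  ereal_inf [set ((M%:R : R) / (N%:R : R))%R%:E | M in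
     [set M : nat | (0 < M)%N /\ exists E D, @good_scheme A rho N M eps E D]].

Definition info {A : sys} (rho : V I A) : \bar R :=
  lim ((fun eps : R => limn_esup (fun N => rate rho N eps)) @ (0 : R)^'+)%classic.

End OPTDefs.

(* Main.v *)
Require Import Defs.
From HB Require Import structures.
From mathcomp Require Import all_boot all_order all_algebra.
From mathcomp Require Import classical_sets boolp reals ereal topology normedtype sequences realfun.
Set Implicit Arguments. Unset Strict Implicit. Unset Printing Implicit Defensive.
Import Order.TTheory GRing.Theory Num.Theory.
Import Defs.
Section Alg.
Context {R : realType} (T : OPT R).
Local Notation V := (V T).
Local Notation I := (sI T).
Local Notation sT := (sT T).
Local Open Scope ring_scope.

Lemma comp0r A B C (f : V B C) : comp f (0 : V A B) = 0.
Proof. by rewrite -(scale0r (0 : V A B)) compZr scale0r. Qed.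
Lemma compNr A B C (f : V B C) (g : V A B) : comp f (- g) = - comp f g.
Proof. by rewrite -scaleN1r compZr scaleN1r. Qed.
Lemma compBr A B C (f : V B C) (g h : V A B) : comp f (g - h) = comp f g - comp f h.
Proof. by rewrite compDr compNr. Qed.
Lemma compNl A B C (f : V B C) (g : V A B) : comp (- f) g = - comp f g.
Proof. by rewrite -scaleN1r compZl scaleN1r. Qed.
Lemma compBl A B C (f h : V B C) (g : V A B) : comp (f - h) g = comp f g - comp h g.
Proof. by rewrite compDl compNl. Qed.
Lemma comp_sum A B C (f : V B C) (s : seq (V A B)) :
  comp f (\sum_(x <- s) x) = \sum_(x <- s) comp f x.
Proof. elim: s => [|x s IH]; first by rewrite !big_nil comp0r.
by rewrite !big_cons compDr IH. Qed.

Lemma parC1 A B C D (g : V B C) (h : V A B) :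
  par (idt D) (comp g h) = comp (par (idt D) g) (par (idt D) h).
Proof. by rewrite -par_comp comp1f. Qed.
Lemma parC2 A B C D (g : V B C) (h : V A B) :
  par (comp g h) (idt D) = comp (par g (idt D)) (par h (idt D)).
Proof. by rewrite -par_comp comp1f. Qed.
Lemma par_split A B C D (f : V A B) (g : V C D) :
  par f g = comp (par f (idt D)) (par (idt A) g).
Proof. by rewrite -par_comp comp1f compf1. Qed.
Lemma par_split' A B C D (f : V A B) (g : V C D) :
  par f g = comp (par (idt B) g) (par f (idt C)).
Proof. by rewrite -par_comp comp1f compf1. Qed.

Lemma asci_nat A B C A' B' C' (f : V A A') (g : V B B') (h : V C C') :
  comp (asci A' B' C') (par f (par g h)) = comp (par (par f g) h) (asci A B C).
Proof.
rewrite -[LHS]compf1 -(asciK A B C) compA -(compA _ _ (asc A B C)) -asc_nat.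
by rewrite compA ascK comp1f.
Qed.

Lemma cancel_idl A B (f g : V A B) : par (idt I) f = par (idt I) g -> f = g.
Proof.
move=> H; rewrite -[f]compf1 -[g]compf1 -(luiK A) !compA -!lu_nat H. by [].
Qed.
Lemma cancel_idr A B (f g : V A B) : par f (idt I) = par g (idt I) -> f = g.
Proof.
move=> H; rewrite -[f]compf1 -[g]compf1 -(ruiK A) !compA -!ru_nat H. by [].
Qed.
Lemma cancel_iso A B C (f g : V B C) (h : V A B) (hi : V B A) :
  comp h hi = idt B -> comp f h = comp g h -> f = g.
Proof. move=> hK H; by rewrite -[f]compf1 -[g]compf1 -hK !compA H. Qed.

End Alg.
Section Coh.
Context {R : realType} (T : OPT R).
Local Notation V := (V T).
Local Notation I := (sI T).
Local Notation sT := (sT T).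
Local Open Scope ring_scope.

Lemma K2 A B : comp (lu (sT A B)) (asc I A B) = par (lu A) (idt B).
Proof.
apply: cancel_idl.
pose Phi := comp (asc I (sT I A) B) (par (asc I I A) (idt B)).
pose Phii := comp (par (asci I I A) (idt B)) (asci I (sT I A) B).
apply: (@cancel_iso _ _ _ _ _ _ _ Phi Phii).
  rewrite /Phi /Phii -compA (compA (par _ _)) -parC2 asciK par_id comp1f asciK //.
transitivity (comp (par (ru I) (idt (sT A B))) (asc (sT I I) A B)).
  rewrite parC1 -compA /Phi -pentagon compA triangle //.
rewrite /Phi compA -asc_nat -compA -parC2 triangle asc_nat par_id //.
Qed.

Lemma cancel_isol A B C (f g : V A B) (h : V B C) (hi : V C B) :
  comp hi h = idt B -> comp h f = comp h g -> f = g.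
Proof. move=> hK H; by rewrite -[f]comp1f -[g]comp1f -hK -!compA H. Qed.

Lemma K3 A B : comp (par (idt A) (ru B)) (asc A B I) = ru (sT A B).
Proof.
apply: cancel_idr.
apply: (@cancel_isol _ _ _ _ _ (asc A B I) (asci A B I)); first exact: ascK.
transitivity (comp (par (idt A) (par (idt B) (lu I)))
     (comp (asc A B (sT I I)) (asc (sT A B) I I))).
  rewrite parC2 compA (asc_nat (idt A) (ru B) (idt I)). rewrite -(triangle B I) parC1 -!compA -pentagon //.
rewrite -(triangle (sT A B) I) -[idt (sT A B)]par_id [RHS]compA (asc_nat (idt A) (idt B) (lu I)) -compA //.
Qed.

Lemma S_lu A : comp (lu A) (sw A I) = ru A.
Proof.
apply: cancel_idr.
apply: (@cancel_isol _ _ _ _ _ (sw A I) (sw I A)); first exact: swK.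
transitivity (comp (lu (sT I A)) (comp (asc I I A) (comp (sw A (sT I I)) (asc A I I)))).
  rewrite (hexagon A I I) compA lu_nat -compA (compA (lu _) (asc _ _ _)) K2 -parC2 //.
rewrite compA K2 compA -(sw_nat (idt A) (lu I)) -compA triangle //.
Qed.

Lemma S_ru B : comp (ru B) (sw I B) = lu B.
Proof. by rewrite -S_lu -compA swK compf1. Qed.

Lemma triangle_i A B : comp (par (ru A) (idt B)) (asci A I B) = par (idt A) (lu B).
Proof. by rewrite -triangle -compA asciK compf1. Qed.
Lemma K2_i A B : comp (par (lu A) (idt B)) (asci I A B) = lu (sT A B).
Proof. by rewrite -K2 -compA asciK compf1. Qed.
Lemma K3_i A B : comp (ru (sT A B)) (asci A B I) = par (idt A) (ru B).
Proof. by rewrite -K3 -compA asciK compf1. Qed.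

End Coh.
Section Disc.
Context {R : realType} (T : OPT R).
Local Notation V := (V T).
Local Notation I := (sI T).
Local Notation sT := (sT T).
Local Open Scope ring_scope.
Variable e : forall A : sys T, V A I.
Hypothesis He : is_det_effect e.

Lemma ch_comp A B C (f : V A B) (g : V B C) : channel f -> channel g -> channel (comp g f).
Proof. move=> Hf Hg; exact: (test_seq Hf Hg). Qed.
Lemma ch_par A B C D (f : V A B) (g : V C D) : channel f -> channel g -> channel (par f g).
Proof. move=> Hf Hg; exact: (test_par Hf Hg). Qed.
Lemma ch_id (A : sys T) : channel (idt A). Proof. exact: test_id. Qed.
Lemma ch_asc (A B C : sys T) : channel (asc A B C). Proof. exact: test_asc. Qed.
Lemma ch_asci (A B C : sys T) : channel (asci A B C). Proof. exact: test_asci. Qed.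
Lemma ch_lu (A : sys T) : channel (lu A). Proof. exact: test_lu. Qed.
Lemma ch_ru (A : sys T) : channel (ru A). Proof. exact: test_ru. Qed.
Lemma ch_lui (A : sys T) : channel (lui A). Proof. exact: test_lui. Qed.
Lemma ch_rui (A : sys T) : channel (rui A). Proof. exact: test_rui. Qed.
Lemma ch_sw (A B : sys T) : channel (sw A B). Proof. exact: test_sw. Qed.
Lemma ch_e (A : sys T) : channel (e A). Proof. exact: (He A).1. Qed.

Lemma eE (A : sys T) (f : V A I) : channel f -> f = e A.
Proof. exact: (He A).2. Qed.
Lemma e_ch A B (P : V A B) : channel P -> comp (e B) P = e A.
Proof. move=> HP; apply: eE; apply: ch_comp HP (ch_e B). Qed.

Lemma ev_ch A B C (f : V A B) (g : V B C) : event f -> channel g -> event (comp g f).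
Proof.
move=> [t [Ht ft]] Hg; exists [seq comp g0 f0 | f0 <- t, g0 <- [:: g]]; split.
  exact: test_seq.
by apply/allpairsP; exists (f, g); rewrite ft inE eqxx.
Qed.
Lemma ev_pre A B C (P : V A B) (a : V B C) : event a -> channel P -> event (comp a P).
Proof.
move=> [t [Ht ft]] HP; exists [seq comp g0 f0 | f0 <- [:: P], g0 <- t]; split.
  exact: test_seq.
by apply/allpairsP; exists (P, a); rewrite ft inE eqxx.
Qed.

Definition dl X Y : V (sT X Y) X := comp (ru X) (par (idt X) (e Y)).
Definition gm X Y : V (sT X Y) Y := comp (lu Y) (par (e X) (idt Y)).

Lemma ch_dl (X Y : sys T) : channel (dl X Y).
Proof. apply: ch_comp (ch_ru _). apply: ch_par (ch_id _) (ch_e _). Qed.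
Lemma ch_gm (X Y : sys T) : channel (gm X Y).
Proof. apply: ch_comp (ch_lu _). apply: ch_par (ch_e _) (ch_id _). Qed.

Lemma dl_nat X X' C (f : V X X') : comp (dl X' C) (par f (idt C)) = comp f (dl X C).
Proof.
rewrite /dl -compA -par_comp comp1f compf1 (par_split f (e C)) compA ru_nat -compA //.
Qed.
Lemma gm_nat C Y Y' (f : V Y Y') : comp (gm C Y') (par (idt C) f) = comp f (gm C Y).
Proof.
rewrite /gm -compA -par_comp comp1f compf1 (par_split' (e C) f) compA lu_nat -compA //.
Qed.

Lemma dl_split (X Y C : sys T) : dl X (sT Y C) = comp (dl X Y) (par (idt X) (dl Y C)).
Proof.
have H : e (sT Y C) = comp (e Y) (dl Y C) by symmetry; apply: e_ch; exact: ch_dl.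
by rewrite /dl H /dl -compA parC1.
Qed.
Lemma gm_split (X Y C : sys T) : gm (sT X Y) C = comp (gm Y C) (par (gm X Y) (idt C)).
Proof.
have H : e (sT X Y) = comp (e Y) (gm X Y) by symmetry; apply: e_ch; exact: ch_gm.
by rewrite /gm H /gm -compA parC2.
Qed.

Lemma dl_asc2 (X Y C : sys T) : comp (par (idt X) (dl Y C)) (asc X Y C) = dl (sT X Y) C.
Proof.
rewrite /dl parC1 -compA -(asc_nat (idt X) (idt Y) (e C)) compA K3 par_id //.
Qed.

Lemma dl_asc (X Y C : sys T) :
  comp (dl X (sT Y C)) (asc X Y C) = comp (dl X Y) (dl (sT X Y) C).
Proof. by rewrite dl_split -compA dl_asc2. Qed.
Lemma dl_asci (X Y C : sys T) : comp (dl (sT X Y) C) (asci X Y C) = par (idt X) (dl Y C).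
Proof. by rewrite -dl_asc2 -compA asciK compf1. Qed.
Lemma gm_asc2 (X Y Z : sys T) : comp (gm X (sT Y Z)) (asc X Y Z) = par (gm X Y) (idt Z).
Proof.
rewrite /gm -[idt (sT Y Z)]par_id -compA -(asc_nat (e X) (idt Y) (idt Z)) compA K2 -parC2 //.
Qed.
Lemma gm_asci (X Y Z : sys T) : comp (par (gm X Y) (idt Z)) (asci X Y Z) = gm X (sT Y Z).
Proof. by rewrite -gm_asc2 -compA asciK compf1. Qed.
Lemma dl_asci2 (X Y Z : sys T) : comp (par (dl X Y) (idt Z)) (asci X Y Z) = par (idt X) (gm Y Z).
Proof.
rewrite /dl /gm parC2 -compA -(asci_nat (idt X) (e Y) (idt Z)) compA triangle_i -parC1 //.
Qed.
Lemma gm_asc (X Y Z : sys T) : comp (par (idt X) (gm Y Z)) (asc X Y Z) = par (dl X Y) (idt Z).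
Proof.
rewrite /dl /gm parC1 -compA -(asc_nat (idt X) (e Y) (idt Z)) compA triangle -parC2 //.
Qed.
Lemma dl_sw (X Y : sys T) : comp (dl Y X) (sw X Y) = gm X Y.
Proof. by rewrite /dl -compA -(sw_nat (e X) (idt Y)) compA S_ru. Qed.
Lemma gm_sw (X Y : sys T) : comp (gm Y X) (sw X Y) = dl X Y.
Proof. by rewrite /gm -compA -(sw_nat (idt X) (e Y)) compA S_lu. Qed.

End Disc.
Section Mid.
Context {R : realType} (T : OPT R).
Local Notation V := (V T).
Local Notation I := (sI T).
Local Notation sT := (sT T).
Local Open Scope ring_scope.
Variable e : forall A : sys T, V A I.
Hypothesis He : is_det_effect e.
Local Notation dl := (dl e).
Local Notation gm := (gm e).

Definition Mq (A' B B' : sys T) : V (sT B (sT A' B')) (sT A' (sT B B')) :=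
  comp (asc A' B B') (comp (par (sw B A') (idt B')) (asci B A' B')).
Definition Mqi (A' B B' : sys T) : V (sT A' (sT B B')) (sT B (sT A' B')) :=
  comp (asc B A' B') (comp (par (sw A' B) (idt B')) (asci A' B B')).
Definition mid (A B A' B' : sys T) : V (sT (sT A B) (sT A' B')) (sT (sT A A') (sT B B')) :=
  comp (asci A A' (sT B B')) (comp (par (idt A) (Mq A' B B')) (asc A B (sT A' B'))).
Definition midi (A B A' B' : sys T) : V (sT (sT A A') (sT B B')) (sT (sT A B) (sT A' B')) :=
  comp (asci A B (sT A' B')) (comp (par (idt A) (Mqi A' B B')) (asc A A' (sT B B'))).

Lemma MqK A' B B' : comp (Mqi A' B B') (Mq A' B B') = idt _.
Proof.
rewrite /Mq /Mqi -!compA (compA (asci A' B B')) ascK comp1f (compA (par _ _)) -parC2 swK par_id.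
by rewrite comp1f asciK.
Qed.
Lemma midK A B A' B' : comp (midi A B A' B') (mid A B A' B') = idt _.
Proof.
rewrite /mid /midi -!compA (compA (asc A A' _)) asciK comp1f (compA (par _ _)) -parC1 MqK par_id.
by rewrite comp1f ascK.
Qed.

Lemma ch_mid A B A' B' : channel (mid A B A' B').
Proof.
apply: ch_comp _ (ch_asci _ _ _); apply: ch_comp (ch_asc _ _ _) _; apply: ch_par (ch_id _) _.
apply: ch_comp _ (ch_asc _ _ _); apply: ch_comp (ch_asci _ _ _) _; apply: ch_par (ch_sw _ _) (ch_id _).
Qed.
Lemma ch_midi A B A' B' : channel (midi A B A' B').
Proof.
apply: ch_comp _ (ch_asci _ _ _); apply: ch_comp (ch_asc _ _ _) _; apply: ch_par (ch_id _) _.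
apply: ch_comp _ (ch_asc _ _ _); apply: ch_comp (ch_asci _ _ _) _; apply: ch_par (ch_sw _ _) (ch_id _).
Qed.

Lemma dl_mid A B A' B' :
  comp (dl (sT A A') (sT B B')) (mid A B A' B') = par (dl A B) (dl A' B').
Proof.
have E1 : comp (par (idt (sT A A')) (dl B B')) (asci A A' (sT B B'))
    = comp (asci A A' B) (par (idt A) (par (idt A') (dl B B'))).
  by rewrite asci_nat par_id.
have E2 : comp (dl A' B) (comp (par (idt A') (dl B B')) (Mq A' B B'))
    = comp (dl A' B') (gm B (sT A' B')).
  rewrite /Mq (compA (par (idt A') (dl B B'))) dl_asc2 (compA (dl (sT A' B) B')) dl_nat.
  by rewrite -compA dl_asci compA dl_sw gm_nat.
rewrite (dl_split He) /mid -compA (compA (par (idt (sT A A')) (dl B B'))) E1.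
rewrite -(compA (asci A A' B)) (compA (dl (sT A A') B)) dl_asci.
rewrite (compA (par (idt A) (par (idt A') (dl B B')))) -parC1 (compA (par (idt A) (dl A' B))) -parC1 E2.
rewrite parC1 -(compA (par (idt A) (dl A' B'))) gm_asc -par_comp comp1f compf1 //.
Qed.

Lemma gm_mid A B A' B' :
  comp (gm (sT A A') (sT B B')) (mid A B A' B') = par (gm A B) (gm A' B').
Proof.
have E3 : comp (gm A' (sT B B')) (Mq A' B B') = par (idt B) (gm A' B').
  rewrite /Mq (compA (gm A' _)) gm_asc2 (compA (par (gm A' B) _)) -parC2 gm_sw dl_asci2 //.
rewrite (gm_split He) /mid -(compA (gm A' _)) (compA (par (gm A A') (idt _))) gm_asci.
rewrite (compA (gm A _)) gm_nat -(compA (Mq A' B B')) gm_asc2 compA E3.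
by rewrite -par_comp comp1f compf1.
Qed.

End Mid.
Section Pow.
Context {R : realType} (T : OPT R).
Local Notation V := (V T).
Local Notation I := (sI T).
Local Notation sT := (sT T).
Local Open Scope ring_scope.
Variable e : forall A : sys T, V A I.
Hypothesis He : is_det_effect e.
Local Notation dl := (dl e).
Local Notation gm := (gm e).

Fixpoint Sh1 (A B : sys T) (k : nat) :
    V (spow1 (sT A B) k) (sT (spow1 A k) (spow1 B k)) :=
  match k as k0 return V (spow1 (sT A B) k0) (sT (spow1 A k0) (spow1 B k0)) with
  | 0 => idt _
  | S k' => comp (mid A B (spow1 A k') (spow1 B k')) (par (idt (sT A B)) (Sh1 A B k'))
  end.
Fixpoint Shi1 (A B : sys T) (k : nat) :
    V (sT (spow1 A k) (spow1 B k)) (spow1 (sT A B) k) :=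
  match k as k0 return V (sT (spow1 A k0) (spow1 B k0)) (spow1 (sT A B) k0) with
  | 0 => idt _
  | S k' => comp (par (idt (sT A B)) (Shi1 A B k')) (midi A B (spow1 A k') (spow1 B k'))
  end.
Fixpoint gpow1 (X Y : sys T) (f : V X Y) (k : nat) : V (spow1 X k) (spow1 Y k) :=
  match k as k0 return V (spow1 X k0) (spow1 Y k0) with
  | 0 => f
  | S k' => par f (gpow1 f k')
  end.

Lemma ShK A B k : comp (Shi1 A B k) (Sh1 A B k) = idt _.
Proof.
elim: k => [|k IH] /=; first exact: comp1f.
by rewrite -compA (compA (midi _ _ _ _)) midK comp1f -parC1 IH par_id.
Qed.
Lemma ch_Sh1 A B k : channel (Sh1 A B k).
Proof.
elim: k => [|k IH] /=; first exact: ch_id.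
apply: ch_comp (ch_mid _ _ _ _); exact: ch_par (ch_id _) IH.
Qed.
Lemma ch_Shi1 A B k : channel (Shi1 A B k).
Proof.
elim: k => [|k IH] /=; first exact: ch_id.
apply: ch_comp (ch_midi _ _ _ _) _; exact: ch_par (ch_id _) IH.
Qed.
Lemma ch_gpow1 X Y (f : V X Y) k : channel f -> channel (gpow1 f k).
Proof. move=> Hf; elim: k => [|k IH] //=; exact: ch_par. Qed.

Lemma dl_Sh A B k : comp (dl (spow1 A k) (spow1 B k)) (Sh1 A B k) = gpow1 (dl A B) k.
Proof.
elim: k => [|k IH] /=; first exact: compf1.
by rewrite compA (dl_mid He) -par_comp compf1 IH.
Qed.
Lemma gm_Sh A B k : comp (gm (spow1 A k) (spow1 B k)) (Sh1 A B k) = gpow1 (gm A B) k.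
Proof.
elim: k => [|k IH] /=; first exact: compf1.
by rewrite compA (gm_mid He) -par_comp compf1 IH.
Qed.

Lemma stpow1_comp X Y (f : V X Y) (rho : V I X) k :
  stpow1 (comp f rho) k = comp (gpow1 f k) (stpow1 rho k).
Proof.
elim: k => [|k IH] //=; by rewrite /stensor IH par_comp compA.
Qed.

End Pow.
Section Norm.
Context {R : realType} (T : OPT R).
Local Notation V := (V T).
Local Notation I := (sI T).
Local Notation sT := (sT T).
Variable e : forall A : sys T, V A I.
Hypothesis He : is_det_effect e.
Local Open Scope ereal_scope.

Lemma opnorm_ch A B (P : V A B) (d : V I A) : channel P ->
  opnorm e (comp P d) <= opnorm e d.
Proof.
move=> HP; apply: ge_ereal_sup => _ [a Ha <-].
have -> : comp ((2%:R : R) *: a - e B)%R (comp P d)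
    = comp ((2%:R : R) *: comp a P - e A)%R d.
  by rewrite compA compBl compZl (e_ch He HP).
apply: ereal_sup_ubound; exists (comp a P) => //.
exact: ev_pre.
Qed.

Lemma opnorm_add A (d1 d2 : V I A) : opnorm e (d1 + d2)%R <= opnorm e d1 + opnorm e d2.
Proof.
apply: ge_ereal_sup => _ [a Ha <-].
rewrite compDr probD EFinD; apply: leeD; apply: ereal_sup_ubound; by exists a.
Qed.

End Norm.
Section Key.
Context {R : realType} (T : OPT R).
Local Notation V := (V T).
Local Notation I := (sI T).
Local Notation sT := (sT T).
Variable e : forall A : sys T, V A I.
Hypothesis He : is_det_effect e.

Definition W1 (X Y Z C : sys T) (Sh : V Z (sT X Y)) (GB : V Y Y) : V (sT Z C) (sT X (sT Y C)) :=
  comp (asc X Y C) (comp (par (par (idt X) GB) (idt C)) (par Sh (idt C))).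
Definition W2 (X Y Z C : sys T) (Sh : V Z (sT X Y)) : V (sT Z C) (sT Y (sT X C)) :=
  comp (asc Y X C) (comp (par (sw X Y) (idt C)) (par Sh (idt C))).

Local Open Scope ereal_scope.

Lemma key_bound X Y Z C (Sh : V Z (sT X Y)) (Shi : V (sT X Y) Z) (GA : V X X) (GB : V Y Y)
  (x : V I (sT Z C)) : comp Shi Sh = idt Z -> channel Shi ->
  opnorm e (comp (par (comp Shi (comp (par GA GB) Sh)) (idt C)) x - x)%R <=
  opnorm e (comp (par GA (idt (sT Y C))) (comp (W1 C Sh GB) x) - comp (W1 C Sh GB) x)%R +
  opnorm e (comp (par GB (idt (sT X C))) (comp (W2 C Sh) x) - comp (W2 C Sh) x)%R.
Proof.
move=> HK HShi.
set x' := comp (par Sh (idt C)) x.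
have Hx : x = comp (par Shi (idt C)) x' by rewrite /x' compA -parC2 HK par_id comp1f.
have E0 : (comp (par (comp Shi (comp (par GA GB) Sh)) (idt C)) x - x
   = comp (par Shi (idt C)) (comp (par (par GA GB) (idt C)) x' - x'))%R.
  by rewrite compBr -Hx !parC2 -!compA.
rewrite E0; apply: le_trans (opnorm_ch He _ (ch_par HShi (ch_id _))) _.
set y := comp (par (par (idt X) GB) (idt C)) x'.
have E1 : (comp (par (par GA GB) (idt C)) x' - x'
   = (comp (par (par GA (idt Y)) (idt C)) y - y) + (y - x'))%R.
  by rewrite [RHS]addrA subrK /y (par_split GA GB) parC2 compA.
rewrite E1; apply: le_trans (opnorm_add _ _ _) _; apply: leeD.
- have E2 : (comp (par (par GA (idt Y)) (idt C)) y - y =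
     comp (asci X Y C) (comp (par GA (idt (sT Y C))) (comp (asc X Y C) y) - comp (asc X Y C) y))%R.
    rewrite compBr (compA (asci X Y C) (asc X Y C)) ascK comp1f.
    by rewrite -[idt (sT Y C)]par_id compA asci_nat -compA (compA (asci X Y C)) ascK comp1f.
  rewrite E2; apply: le_trans (opnorm_ch He _ (ch_asci _ _ _)) _.
  by rewrite /W1 /y /x' -!compA.
- pose P2 := comp (asc Y X C) (par (sw X Y) (idt C)).
  pose P2i := comp (par (sw Y X) (idt C)) (asci Y X C).
  have HP : comp P2i P2 = idt _.
    by rewrite /P2 /P2i -compA (compA (asci Y X C)) ascK comp1f -parC2 swK par_id.
  have E2 : (y - x' = comp P2i (comp (par GB (idt (sT X C))) (comp P2 x') - comp P2 x'))%R.
    rewrite compBr (compA P2i P2 x') HP comp1f /y; congr (_ - _)%R.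
    rewrite /P2i /P2 -[idt (sT X C)]par_id -(compA (par (sw Y X) (idt C)) (asci Y X C)).
    rewrite (compA (asci Y X C) (par GB _)) asci_nat -(compA (par (par GB (idt X)) (idt C))).
    rewrite -(compA (asc Y X C)) (compA (asci Y X C) (asc Y X C)) ascK comp1f compA -parC2 compA -parC2.
    by rewrite sw_nat -compA swK compf1.
  rewrite E2; apply: le_trans (opnorm_ch He _ _) _.
    apply: ch_comp (ch_asci _ _ _) (ch_par (ch_sw _ _) (ch_id _)).
  by rewrite /W2 /P2 /x' -!compA.
Qed.

End Key.
Section Comb.
Context {R : realType} (T : OPT R).
Local Notation V := (V T).
Local Notation I := (sI T).
Local Notation sT := (sT T).
Variable e : forall A : sys T, V A I.
Hypothesis He : is_det_effect e.
Local Notation dl := (dl e).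
Local Notation gm := (gm e).
Variable O : sys T.

Fixpoint Jn (m n : nat) : V (sT (spow1 O m) (spow1 O n)) (spow1 O (m + n.+1)) :=
  match m as m0 return V (sT (spow1 O m0) (spow1 O n)) (spow1 O (m0 + n.+1)) with
  | 0 => idt _
  | S m' => comp (par (idt O) (Jn m' n)) (asc O (spow1 O m') (spow1 O n))
  end.
Fixpoint Jin (m n : nat) : V (spow1 O (m + n.+1)) (sT (spow1 O m) (spow1 O n)) :=
  match m as m0 return V (spow1 O (m0 + n.+1)) (sT (spow1 O m0) (spow1 O n)) with
  | 0 => idt _
  | S m' => comp (asci O (spow1 O m') (spow1 O n)) (par (idt O) (Jin m' n))
  end.
Lemma JK m n : comp (Jin m n) (Jn m n) = idt _.
Proof.
elim: m => [|m IH] /=; first exact: comp1f.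
by rewrite -compA (compA (par _ _)) -parC1 IH par_id comp1f ascK.
Qed.
Lemma ch_Jn m n : channel (Jn m n).
Proof. elim: m => [|m IH] /=; [exact: ch_id|exact: ch_comp (ch_asc _ _ _) (ch_par (ch_id _) IH)]. Qed.
Lemma ch_Jin m n : channel (Jin m n).
Proof. elim: m => [|m IH] /=; [exact: ch_id|exact: ch_comp (ch_par (ch_id _) IH) (ch_asci _ _ _)]. Qed.

Lemma margAE X C (Om : V I (sT X C)) : margA e Om = comp (dl X C) Om.
Proof. by rewrite /margA /dl compA. Qed.
Lemma margBE X C (Om : V I (sT X C)) : margB e Om = comp (gm X C) Om.
Proof. by rewrite /margB /gm compA. Qed.

Lemma dl_idch X Y (G : V Y Y) : channel G -> comp (dl X Y) (par (idt X) G) = dl X Y.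
Proof. by move=> HG; rewrite /dl -compA -parC1 (e_ch He HG). Qed.

Lemma refinement_map A B (W : V A B) s Om : channel W -> refinement s Om ->
  refinement (map (comp W) s) (comp W Om).
Proof.
move=> HW [[r [t [Ht Hp]]] Hs]; split.
  exists (map (comp W) r), (map (comp W) t); split.
    have -> : map (comp W) t = [seq comp g f | f <- t, g <- [:: W]].
      by elim: t {Hp Ht} => //= a t ->.
    exact: test_seq.
  by rewrite -map_cat; apply: perm_map.
by rewrite -Hs comp_sum big_map.
Qed.

Lemma margA_W1 A B k C (Psi : V I (sT A B)) (Om : V I (sT (spow1 (sT A B) k) C))
  (GB : V (spow1 B k) (spow1 B k)) : channel GB ->
  margA e Om = stpow1 Psi k ->
  margA e (comp (W1 C (Sh1 A B k) GB) Om) = stpow1 (margA e Psi) k.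
Proof.
move=> HG; rewrite !margAE /W1 => HO.
rewrite !compA (dl_asc He) -(compA (dl _ _) (dl _ _)) dl_nat compA dl_idch //.
rewrite -(compA (dl _ _) (dl _ _)) dl_nat compA (dl_Sh He) -compA HO stpow1_comp //.
Qed.

Lemma margA_W2 A B k C (Psi : V I (sT A B)) (Om : V I (sT (spow1 (sT A B) k) C)) :
  margA e Om = stpow1 Psi k ->
  margA e (comp (W2 C (Sh1 A B k)) Om) = stpow1 (margB e Psi) k.
Proof.
rewrite !margAE margBE /W2 => HO.
rewrite !compA (dl_asc He) -(compA (dl _ _) (dl _ _)) dl_nat compA (dl_sw e).
rewrite -(compA (gm _ _) (dl _ _)) dl_nat compA (gm_Sh He) -compA HO stpow1_comp //.
Qed.

End Comb.
Section Comb2.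
Context {R : realType} (T : OPT R).
Local Notation V := (V T).
Local Notation I := (sI T).
Local Notation sT := (sT T).
Variable e : forall A : sys T, V A I.
Hypothesis He : is_det_effect e.
Variable O : sys T.
Local Open Scope ereal_scope.

Lemma good_comb A B (Psi : V I (sT A B)) k m1 m2 (epsA epsB : R)
  (EA : V (spow A k.+1) (spow O m1.+1)) (DA : V (spow O m1.+1) (spow A k.+1))
  (EB : V (spow B k.+1) (spow O m2.+1)) (DB : V (spow O m2.+1) (spow B k.+1)) :
  @good_scheme _ T e O A (margA e Psi) k.+1 m1.+1 epsA EA DA ->
  @good_scheme _ T e O B (margB e Psi) k.+1 m2.+1 epsB EB DB ->
  @good_scheme _ T e O (sT A B) Psi k.+1 (m1.+1 + m2.+1) (epsA + epsB)
     (comp (Jn O m1 m2) (comp (par EA EB) (Sh1 A B k)))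
     (comp (Shi1 A B k) (comp (par DA DB) (Jin O m1 m2))).
Proof.
move=> [hEA [hDA hSA]] [hEB [hDB hSB]].
split; first exact: ch_comp (ch_comp (ch_Sh1 _ _ _) (ch_par hEA hEB)) (ch_Jn _ _ _).
split; first exact: ch_comp (ch_comp (ch_Jin _ _ _) (ch_par hDA hDB)) (ch_Shi1 _ _ _).
have HDE : comp (comp (Shi1 A B k) (comp (par DA DB) (Jin O m1 m2)))
                (comp (Jn O m1 m2) (comp (par EA EB) (Sh1 A B k)))
    = comp (Shi1 A B k) (comp (par (comp DA EA) (comp DB EB)) (Sh1 A B k)).
  by rewrite -!compA (compA (Jin O m1 m2)) JK comp1f (compA (par DA DB)) -par_comp.
have hGA : channel (comp DA EA) by exact: ch_comp.
have hGB : channel (comp DB EB) by exact: ch_comp.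
rewrite EFinD; apply: le_lt_trans (lteD hSA hSB).
apply: ge_ereal_sup => _ [C [s [[Om [[HsOm HmOm] Href]] ->]]].
rewrite HDE.
apply: le_trans.
  apply: lee_sum => x _.
  exact: (@key_bound _ _ e He _ _ _ C (Sh1 A B k) (Shi1 A B k)
   (comp DA EA) (comp DB EB) x (ShK A B k) (ch_Shi1 A B k)).
rewrite big_split /=; apply: leeD; apply: ereal_sup_ubound.
- have hW : channel (W1 C (Sh1 A B k) (comp DB EB)).
    apply: ch_comp (ch_asc _ _ _).
    exact: ch_comp (ch_par (ch_Sh1 _ _ _) (ch_id _)) (ch_par (ch_par (ch_id _) hGB) (ch_id _)).
  exists (sT (spow1 B k) C), (map (comp (W1 C (Sh1 A B k) (comp DB EB))) s); split.
    exists (comp (W1 C (Sh1 A B k) (comp DB EB)) Om); split; last exact: refinement_map.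
    split; first exact: ev_ch HsOm hW.
    exact: margA_W1.
  by rewrite big_map.
- have hW : channel (W2 C (Sh1 A B k)).
    apply: ch_comp (ch_asc _ _ _).
    exact: ch_comp (ch_par (ch_Sh1 _ _ _) (ch_id _)) (ch_par (ch_sw _ _) (ch_id _)).
  exists (sT (spow1 A k) C), (map (comp (W2 C (Sh1 A B k))) s); split.
    exists (comp (W2 C (Sh1 A B k)) Om); split; last exact: refinement_map.
    split; first exact: ev_ch HsOm hW.
    exact: margA_W2.
  by rewrite big_map.
Qed.

End Comb2.
From mathcomp Require Import lra.
Section Anal.
Context {R : realType}.
Local Open Scope ereal_scope.

Lemma inf_add_le (S1 S2 S3 : set (\bar R)) :
  (forall a, S1 a -> 0 <= a) -> (forall b, S2 b -> 0 <= b) ->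
  (forall a b, S1 a -> S2 b -> ereal_inf S3 <= a + b) ->
  ereal_inf S3 <= ereal_inf S1 + ereal_inf S2.
Proof.
move=> H1 H2 H.
have i1 : 0 <= ereal_inf S1 by apply: le_ereal_inf_tmp => ? /H1.
have i2 : 0 <= ereal_inf S2 by apply: le_ereal_inf_tmp => ? /H2.
case E1 : (ereal_inf S1) i1 => [x| |] i1 //; last by rewrite addye ?leey // gt_eqF // (lt_le_trans _ i2) ?ltNy0.
case E2 : (ereal_inf S2) i2 => [y| |] i2 //; last by rewrite addey ?leey.
apply/lee_addgt0Pr => eps heps.
have heps2 : (0 < eps / 2)%R by rewrite divr_gt0.
have f1 : ereal_inf S1 \is a fin_num by rewrite E1.
have f2 : ereal_inf S2 \is a fin_num by rewrite E2.
have [a Sa ha] := lb_ereal_inf_adherent heps2 f1.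
have [b Sb hb] := lb_ereal_inf_adherent heps2 f2.
apply: le_trans (H _ _ Sa Sb) _.
rewrite E1 in ha; rewrite E2 in hb.
apply: le_trans (leeD (ltW ha) (ltW hb)) _.
by rewrite -!EFinD lee_fin; lra.
Qed.

Lemma limsup_add (u v w : (\bar R)^nat) :
  (forall m, (0 < m)%N -> u m <= v m + w m) -> (forall m, 0 <= v m) -> (forall m, 0 <= w m) ->
  limn_esup u <= limn_esup v + limn_esup w.
Proof.
move=> H Hv Hw; rewrite !limn_esup_lim.
have lv : 0 <= limn (esups v).
  apply: lime_ge; first exact: is_cvg_esups.
  apply: nearW => n; apply: le_trans (Hv n) _; apply: ereal_sup_ubound; by exists n => /=.
have lw : 0 <= limn (esups w).
  apply: lime_ge; first exact: is_cvg_esups.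
  apply: nearW => n; apply: le_trans (Hw n) _; apply: ereal_sup_ubound; by exists n => /=.
have def : limn (esups v) +? limn (esups w) by exact: ge0_adde_def.
rewrite -limeD //; try exact: is_cvg_esups.
apply: lee_lim; [exact: is_cvg_esups|apply: is_cvgeD => //; exact: is_cvg_esups|].
near=> n; apply: ge_ereal_sup => _ [m /= hm <-].
apply: le_trans (H m _) _.
  by apply: leq_trans hm; near: n; exists 1%N.
by apply: leeD; apply: ereal_sup_ubound; exists m.
Unshelve. all: by end_near. Qed.

Lemma limsup_le (u v : (\bar R)^nat) : (forall m, u m <= v m) -> limn_esup u <= limn_esup v.
Proof.
move=> H; rewrite !limn_esup_lim.
apply: lee_lim; [exact: is_cvg_esups|exact: is_cvg_esups|].
apply: nearW => n; apply: ge_ereal_sup => _ [m /= hm <-].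
apply: le_trans (H m) _; apply: ereal_sup_ubound; by exists m.
Qed.

End Anal.
Section Final.
Context {R : realType} (T : OPT R).
Local Notation V := (V T).
Local Notation I := (sI T).
Local Notation sT := (sT T).
Variable e : forall A : sys T, V A I.
Hypothesis He : is_det_effect e.
Variable O : sys T.
Local Open Scope ereal_scope.

Lemma rate_ge0 A (rho : V I A) N (eps : R) : 0 <= rate e O rho N eps.
Proof. by apply: le_ereal_inf_tmp => _ [M _ <-]; rewrite lee_fin divr_ge0. Qed.

Lemma rate_mono A (rho : V I A) N (eps eps' : R) : (eps <= eps')%R ->
  rate e O rho N eps' <= rate e O rho N eps.
Proof.
move=> h; apply: ereal_inf_le_tmp => _ [M [hM [E [D [h1 [h2 h3]]]]] <-].
exists M => //; split => //; exists E, D; split => //; split => //.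
by apply: lt_le_trans h3 _; rewrite lee_fin.
Qed.

Lemma rate_comb A B (Psi : V I (sT A B)) k (epsA epsB : R) :
  rate e O Psi k.+1 (epsA + epsB) <=
  rate e O (margA e Psi) k.+1 epsA + rate e O (margB e Psi) k.+1 epsB.
Proof.
apply: inf_add_le.
- by move=> _ [M _ <-]; rewrite lee_fin divr_ge0.
- by move=> _ [M _ <-]; rewrite lee_fin divr_ge0.
move=> _ _ [[|m1] [//= _ [EA [DA hA]]] <-] [[|m2] [//= _ [EB [DB hB]]] <-].
apply: ereal_inf_lbound; exists (m1.+1 + m2.+1)%N.
  split => //.
  exists (comp (Jn O m1 m2) (comp (par EA EB) (Sh1 A B k))).
  exists (comp (Shi1 A B k) (comp (par DA DB) (Jin O m1 m2))).
  exact: good_comb.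
by rewrite natrD mulrDl EFinD.
Qed.

Lemma f_comb A B (Psi : V I (sT A B)) (epsA epsB : R) :
  limn_esup (fun N => rate e O Psi N (epsA + epsB)) <=
  limn_esup (fun N => rate e O (margA e Psi) N epsA) +
  limn_esup (fun N => rate e O (margB e Psi) N epsB).
Proof.
apply: limsup_add => [[|k] //= _|m|m]; [exact: rate_comb|exact: rate_ge0|exact: rate_ge0].
Qed.

Lemma info_cvg A (rho : V I A) : info e O rho =
  ereal_sup ((fun eps => limn_esup (fun N => rate e O rho N eps)) @`
     [set` Interval (BRight (0%R : R)) (BInfty R false)]).
Proof.
apply: cvg_lim => //.
apply: nonincreasing_at_right_cvge => // x y hx hy hxy.
by apply: limsup_le => n; exact: rate_mono.
Qed.

Lemma main_ineq A B (Psi : V I (sT A B)) :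
  info e O Psi <= info e O (margA e Psi) + info e O (margB e Psi).
Proof.
rewrite !info_cvg; apply: ge_ereal_sup => _ [eps heps <-].
move: heps; rewrite /= in_itv /= andbT => heps.
have h2 : (0 < eps / 2)%R by rewrite divr_gt0.
rewrite /= (splitr eps).
apply: le_trans (f_comb _ _ _) _.
by apply: leeD; apply: ereal_sup_ubound; exists (eps / 2)%R => //=; rewrite in_itv /= andbT.
Qed.

End Final.

Unset Implicit Arguments.
Local Open Scope ereal_scope.

Theorem mainTheorem2 (R : realType) (T : OPT R)
  (e : forall A : sys T, V T A (sI T)) (O : sys T)
  (Hsc : strongly_causal T) (He : is_det_effect e)
  (Hdig : digitalizable O)
  (A B : sys T) (Psi : V T (sI T) (sT T A B)) (HPsi : nstate Psi) :
  info e O Psi <= info e O (margA e Psi) + info e O (margB e Psi).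
Proof. exact: (main_ineq He). Qed.
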